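(* The multiplicative GNS $s(n)=q^n-1$ on $\mathbf Z[[q-1]]$ is $\mathbf T$-Green: for all positive integers $m$ and $a,b\mid m$, with $g=\gcd(a,b)$ and $\ell=\operatorname{lcm}(a,b)$, \[ q^m-1\equiv\frac m\ell\cdot\frac{(q^a-1)(q^b-1)}{q^g-1}\bmod (q^a-1)(q^b-1). \]
   Context: A GNS over $D$ is $s\colon\mathbf N\to D$ with $s(0)=0$, $s(n)$ a non-zero-divisor for $n>0$, $s(n-k)\mid s(n)-s(k)$ for $n>k>0$. $\mathbf T$-Green means the congruence $s(m)\equiv\frac m\ell\frac{s(a)s(b)}{s(g)}\bmod s(a)s(b)$ holds for all $m\ge1$ and $a,b\mid m$. *)

(* Defs.v *)
From mathcomp Require Import all_boot all_order all_algebra.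
Set Implicit Arguments. Unset Strict Implicit. Unset Printing Implicit Defensive.
Import GRing.Theory Num.Theory.
Local Open Scope ring_scope.

(* The ring Z[[q-1]] is modelled as formal power series in t := q - 1 with
   integer coefficients, i.e. coefficient sequences  nat -> int  with the
   Cauchy product.  Every element occurring in the statement is a polynomial
   in q, hence a polynomial in t; we represent it as an element of {poly int}
   in the variable t, and embed {poly int} into Z[[t]] via its coefficients. *)

Definition pseries := nat -> int.

Definition psmul (f g : pseries) : pseries :=
  fun n => \sum_(i < n.+1) f i * g (n - i)%N.

Definition ps_of_poly (p : {poly int}) : pseries := fun n => p`_n.

Definition ps_congr (x y M : {poly int}) : Prop :=
  exists c : pseries, ps_of_poly (x - y) = psmul (ps_of_poly M) c.

Definition qvar : {poly int} := 1 + 'X.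

Definition gns_s (n : nat) : {poly int} := qvar ^+ n - 1.

(* Main.v *)
Require Import Defs.
From mathcomp Require Import all_boot all_order all_algebra.
From mathcomp Require Import ring zify.
From Stdlib Require Import FunctionalExtensionality.
Import GRing.Theory.
Set Implicit Arguments. Unset Strict Implicit.
Local Open Scope ring_scope.

Definition dv (R : comPzRingType) (M x : R) := exists C, x = M * C.

Lemma dvD (R : comPzRingType) (M x y : R) : dv M x -> dv M y -> dv M (x + y).
Proof. by move=> [c ->] [d ->]; exists (c + d); ring. Qed.
Lemma dvN (R : comPzRingType) (M x : R) : dv M x -> dv M (- x).
Proof. by move=> [c ->]; exists (- c); ring. Qed.
Lemma dvB (R : comPzRingType) (M x y : R) : dv M x -> dv M y -> dv M (x - y).
Proof. by move=> hx hy; apply: dvD => //; apply: dvN. Qed.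
Lemma dvMl (R : comPzRingType) (M x z : R) : dv M x -> dv M (z * x).
Proof. by move=> [c ->]; exists (z * c); ring. Qed.
Lemma dvMn (R : comPzRingType) (M x : R) k : dv M x -> dv M (x *+ k).
Proof. by move=> [c ->]; exists (c *+ k); rewrite mulrnAr. Qed.
Lemma dv0 (R : comPzRingType) (M : R) : dv M 0.
Proof. by exists 0; rewrite mulr0. Qed.
Lemma dv_sum (R : comPzRingType) (M : R) m n (F : nat -> R) :
  (forall i, dv M (F i)) -> dv M (\sum_(m <= i < n) F i).
Proof.
move=> h; apply: (big_ind (dv M)); [exact: dv0 | exact: dvD | by move=> i _].
Qed.

Lemma yexp_mod (R : comPzRingType) (y : R) b n :
  dv (y ^+ b - 1) (y ^+ n - y ^+ (n %% b)%N).
Proof.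
have -> : y ^+ n = y ^+ (n %% b)%N * (y ^+ b) ^+ (n %/ b)%N.
  by rewrite -exprM -exprD addnC mulnC -divn_eq.
have -> : y ^+ (n %% b)%N * (y ^+ b) ^+ (n %/ b)%N - y ^+ (n %% b)%N
   = y ^+ (n %% b)%N * ((y ^+ b) ^+ (n %/ b)%N - 1) by ring.
apply: dvMl. rewrite [X in dv _ X]subrX1. by exists (\sum_(i < (n %/ b)%N) (y ^+ b) ^+ i).
Qed.

Lemma blocks (R : nmodType) (F : nat -> R) b k :
  \sum_(0 <= j < b * k) F (j %% b)%N = (\sum_(0 <= j < b) F j) *+ k.
Proof.
elim: k => [|k IH]; first by rewrite muln0 big_geq.
rewrite mulnS addnC (@big_cat_nat _ _ _ (b * k) 0 (b * k + b)) ?leq_addr //= IH mulrS addrC.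
congr (_ + _).
rewrite -{1}(add0n (b * k)%N) big_addn addnC addnK.
apply: eq_big_nat => i /andP [_ hi].
by rewrite addnC mulnC modnMDl modn_small.
Qed.

Lemma perm_sum (R : nmodType) (F : nat -> R) a b : coprime a b ->
  \sum_(i < b) F ((a * i) %% b)%N = \sum_(i < b) F i.
Proof.
move=> co; case: b co => [|b] co; first by rewrite !big_ord0.
have co2 : coprime b.+1 a by rewrite coprime_sym.
pose h (i : 'I_b.+1) : 'I_b.+1 := Ordinal (ltn_pmod (a * i) (ltn0Sn b)).
have hinj : injective h.
  have key : forall i j : 'I_b.+1, (i <= j)%N -> h i = h j -> i = j.
    move=> i j le /(congr1 val) /= e; apply/val_inj => /=.
    have : (a * j == a * i %[mod b.+1]) by rewrite e.
    rewrite eqn_mod_dvd ?leq_mul2l ?le ?orbT // -mulnBr Gauss_dvdr //.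
    case: (posnP (j - i)) => [z|p]; first by move=> _; apply/eqP; rewrite eqn_leq le /=; lia.
    rewrite gtnNdvd //; have := ltn_ord j; lia.
  move=> i j e; case: (leqP i j) => l; first exact: key.
  by apply/esym/key => //; apply: ltnW.
rewrite [RHS](reindex_inj hinj) /=. by [].
Qed.

Lemma key (R : comPzRingType) (y : R) a b k : coprime a b -> (0 < b)%N ->
  dv (y ^+ b - 1)
     (\sum_(0 <= j < b * k) (y ^+ a) ^+ j - (\sum_(0 <= j < b) y ^+ j) *+ k).
Proof.
move=> co bpos.
set M := y ^+ b - 1.
have s1 : dv M (\sum_(0 <= j < b * k) (y ^+ a) ^+ j
               - \sum_(0 <= j < b * k) y ^+ (a * (j %% b)%N)).
  rewrite -sumrB; apply: dv_sum => j.
  rewrite -exprM.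
  have -> : y ^+ (a * j) - y ^+ (a * (j %% b)%N) =
    (y ^+ (a * j) - y ^+ ((a * j) %% b)%N) - (y ^+ (a * (j %% b)%N) - y ^+ ((a * (j %% b)) %% b)%N).
    by rewrite modnMmr; ring.
  by apply: dvB; apply: yexp_mod.
have s2 : \sum_(0 <= j < b * k) y ^+ (a * (j %% b)%N) = (\sum_(0 <= j < b) y ^+ (a * j)) *+ k.
  by rewrite (blocks (fun j => y ^+ (a * j))).
have s3 : dv M (\sum_(0 <= j < b) y ^+ (a * j) - \sum_(0 <= j < b) y ^+ j).
  have -> : \sum_(0 <= j < b) y ^+ j = \sum_(0 <= j < b) y ^+ ((a * j) %% b)%N.
    rewrite !big_mkord; exact/esym/(perm_sum (fun j => y ^+ j)).
  rewrite -sumrB; apply: dv_sum => j; exact: yexp_mod.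
have -> : \sum_(0 <= j < b * k) (y ^+ a) ^+ j - (\sum_(0 <= j < b) y ^+ j) *+ k =
  (\sum_(0 <= j < b * k) (y ^+ a) ^+ j - \sum_(0 <= j < b * k) y ^+ (a * (j %% b)%N))
  + (\sum_(0 <= j < b) y ^+ (a * j) - \sum_(0 <= j < b) y ^+ j) *+ k.
  by rewrite s2 mulrnBl; ring.
by apply: dvD => //; apply: dvMn.
Qed.

Lemma monic_q (g : nat) : (0 < g)%N -> qvar ^+ g - 1 \is monic.
Proof.
move=> gp.
have mq : qvar \is monic by rewrite /qvar addrC -polyC1 monicXaddC.
have sq : size qvar = 2 by rewrite /qvar addrC -polyC1 size_XaddC.
have sz : (1 < size (qvar ^+ g))%N.
  have := size_exp qvar g; rewrite sq /= mul1n.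
  case: (size _) => [|[|n]] //= e; lia.
rewrite monicE lead_coefDl; first by rewrite -monicE monic_exp.
rewrite -polyC1 -polyCN; apply: leq_ltn_trans sz; exact: size_polyC_leq1.
Qed.

Theorem lemma5p15 (m a b : nat) :
  (0 < m)%N -> (a %| m)%N -> (b %| m)%N ->
  ps_congr (gns_s m)
           (((m %/ lcmn a b)%N)%:R * ((gns_s a * gns_s b) %/ gns_s (gcdn a b)))
           (gns_s a * gns_s b).
Proof.
move=> mp am bm.
have ap : (0 < a)%N := dvdn_gt0 mp am.
have bp : (0 < b)%N := dvdn_gt0 mp bm.
set g := gcdn a b.
have gp : (0 < g)%N by rewrite gcdn_gt0 ap.
set a' := (a %/ g)%N. set b' := (b %/ g)%N.
have ha : a = (a' * g)%N by rewrite divnK // dvdn_gcdl.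
have hb : b = (b' * g)%N by rewrite divnK // dvdn_gcdr.
have b'p : (0 < b')%N by move: bp; rewrite hb; case: (b'); lia.
have co : coprime a' b'.
  by rewrite /coprime -(eqn_pmul2r gp) mul1n muln_gcdl -ha -hb.
have hl : lcmn a b = (a' * b' * g)%N.
  apply/eqP; rewrite -(eqn_pmul2r gp) muln_lcm_gcd -/g {1}ha {1}hb; apply/eqP; lia.
set k := (m %/ lcmn a b)%N.
have hm : m = (k * lcmn a b)%N by rewrite divnK // dvdn_lcm am bm.
set y := qvar ^+ g.
set A := \sum_(i < a') y ^+ i.
set B := \sum_(i < b') y ^+ i.
have ea : gns_s a = (y - 1) * A by rewrite /gns_s ha mulnC exprM subrX1.
have eb : gns_s b = (y - 1) * B by rewrite /gns_s hb mulnC exprM subrX1.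
have eg : gns_s g = y - 1 by [].
set T := \sum_(i < b' * k) (y ^+ a') ^+ i.
have em : gns_s m = (y - 1) * A * T.
  rewrite /gns_s hm hl.
  have -> : qvar ^+ (k * (a' * b' * g)) = (y ^+ a') ^+ (b' * k).
    by rewrite /y -!exprM; congr (_ ^+ _); lia.
  by rewrite [LHS]subrX1 -/T [y ^+ a' - 1]subrX1.
have eD : (gns_s a * gns_s b) %/ gns_s g = (y - 1) * A * B.
  rewrite ea eb eg.
  have -> : (y - 1) * A * ((y - 1) * B) = ((y - 1) * A * B) * (y - 1) by ring.
  by rewrite Pdiv.IdomainMonic.mulpK // monic_q.
have [C hC] := key y k co b'p.
move: hC; rewrite !big_mkord -/T -/B => hC.
exists (ps_of_poly C).
have -> : gns_s m - k%:R * ((gns_s a * gns_s b) %/ gns_s g) = (gns_s a * gns_s b) * C.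
  rewrite em eD ea eb.
  have -> : (y - 1) * A * T - k%:R * ((y - 1) * A * B) = (y - 1) * A * (T - B *+ k).
    rewrite -mulr_natl; ring.
  rewrite hC [y ^+ b' - 1]subrX1 -/B; ring.
by apply: functional_extensionality => n; rewrite /ps_of_poly /psmul coefM.
Qed.
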